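(* Let $\Gamma$ be a graph on vertex set $[n]$, let $r\in\mathbb{N}$, and suppose $\Gamma$ contains a spanning subgraph $A$ which is an $r$-flower (with respect to the host graph $\Gamma$), with sets $V^1,\dots,V^{r+1}$ as in the definition. Then $A$ is $C_4$-saturated in $\Gamma$ and $$ |E(A)|=|E(A[V^{r+1}])|+\frac{3}{2}\left(n-|V^{r+1}|-r\right)+3\left(|V^2|+\ldots+|V^{r+1}|\right). $$
   Context: For a graph $A$ and $V\subseteq V(A)$, $A[V]$ is the induced subgraph and $N_{A}(v)$ the neighbourhood of $v$. A spanning subgraph $A$ of $\Gamma$ is $C_4$-saturated in $\Gamma$ if $A$ contains no copy of the $4$-cycle $C_4$ but adding to $A$ any edge of $\Gamma$ not in $A$ creates a copy of $C_4$. Let $A\subseteq\Gamma$ be a graph on $[n]$ and $r\in\mathbb{N}$. $A$ is an $r$-flower if there exist sets $V^{1},\dots,V^{r+1}$ and, for each $i\in[r]$, sets $R_i,V^i_1,V^i_2,V^i_3$ such that: (1) $V^1=[n]$ and for every $\ell\in[r]$, $V^\ell$ is the disjoint union of $V^{r+1}$ and the sets $V^i_1,V^i_2,V^i_3,R_i$ for $i=\ell,\dots,r$; (2) for every $i\in[r]$, $R_i=\{v^i_1,v^i_2,v^i_3\}$ consists of three pairwise adjacent (in $A$) vertices; (3) for every $i\in[r]$, $j\in\{1,2,3\}$, $N_{A[V^i]}(v^i_j)\setminus R_i=V^i_j$; (4) for every $i\in[r]$, $j\in\{1,2,3\}$ there is a partition $V^i_j=W^i_j\sqcup U^i_j\sqcup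 Y^i_j$ such that (4.1) the edges of $A[W^i_j\sqcup V^{i+1}]$ not in $A[V^{i+1}]$ form a perfect matching between $W^i_j$ and $V^{i+1}$, (4.2) the edges of $A[W^i_j\sqcup U^i_j]$ form a perfect matching between $W^i_j$ and $U^i_j$, (4.3) the edges of $A[Y^i_j]$ form a perfect matching of $Y^i_j$; (5) $A[V^{r+1}]$ is an inclusion-maximal $C_4$-free graph, i.e. $C_4$-saturated in $\Gamma[V^{r+1}]$; (6) $A$ has no edges other than those described in (2)–(5). *)

(* Defs.v *)
From mathcomp Require Import all_boot all_order all_algebra.
Set Implicit Arguments. Unset Strict Implicit. Unset Printing Implicit Defensive.
Import GRing.Theory Num.Theory.

Section Graphs.
Variable T : finType.

Definition simple_graph (G : rel T) : Prop :=
  (forall x y, G x y = G y x) /\ (forall x, ~~ G x x).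

(* induced subgraph G[S] (vertices outside S become isolated) *)
Definition induced (G : rel T) (S : {set T}) : rel T :=
  fun x y => [&& G x y, x \in S & y \in S].

Definition add_edge (G : rel T) (x y : T) : rel T :=
  fun a b => G a b || ((a == x) && (b == y)) || ((a == y) && (b == x)).

Definition has_C4 (G : rel T) : Prop :=
  exists a b c d : T, [/\ uniq [:: a; b; c; d],
    G a b, G b c, G c d & G d a].

Definition C4_saturated_in (G A : rel T) : Prop :=
  [/\ (forall x y, A x y -> G x y),
      ~ has_C4 A &
      (forall x y, G x y -> ~~ A x y -> has_C4 (add_edge A x y))].

Definition disjoint_union (S : {set T}) (s : seq {set T}) : Prop :=
  S = \bigcup_(X <- s) X /\
  (forall a b, a < b < size s -> [disjoint nth set0 s a & nth set0 s b]).

Definition pm_between (F : rel T) (X Y : {set T}) : Prop :=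
  (forall x y, F x y -> ((x \in X) && (y \in Y)) || ((x \in Y) && (y \in X))) /\
  (forall x, x \in X :|: Y -> #|[set y | F x y]| = 1).

Definition pm_of (F : rel T) (X : {set T}) : Prop :=
  (forall x y, F x y -> (x \in X) && (y \in X)) /\
  (forall x, x \in X -> #|[set y | F x y]| = 1).

(* number of edges of a graph on T, via an injection into nat for ordering:
   we count unordered pairs using ordered pairs (x, y) with enum_rank x < enum_rank y *)
Definition nedges (G : rel T) : nat :=
  #|[set p : T * T | (enum_rank p.1 < enum_rank p.2)%N && G p.1 p.2]|.

End Graphs.

Section Flower.
Variable n : nat.
Local Notation V_t := 'I_n.

(* Data: levels i = 1..r (as nats), j : 'I_3 indexes j in {1,2,3}. *)
Definition Rset (v : nat -> 'I_3 -> V_t) (i : nat) : {set V_t} :=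
  [set v i (inord 0); v i (inord 1); v i (inord 2)].

(* parts of V^l in condition (1): V^{r+1}, and R_i, V^i_1, V^i_2, V^i_3 for l <= i <= r *)
Definition level_parts (r : nat) (V : nat -> {set V_t}) (v : nat -> 'I_3 -> V_t)
  (Vs : nat -> 'I_3 -> {set V_t}) (l : nat) : seq {set V_t} :=
  V r.+1 :: flatten [seq [:: Rset v i; Vs i (inord 0); Vs i (inord 1); Vs i (inord 2)]
                    | i <- iota l (r.+1 - l)].

Definition cross_edges (A : rel V_t) (W Vn : {set V_t}) : rel V_t :=
  fun x y => induced A (W :|: Vn) x y && ~~ ((x \in Vn) && (y \in Vn)).

Definition is_flower_with (G A : rel V_t) (r : nat) (V : nat -> {set V_t}) : Prop :=
  exists (v : nat -> 'I_3 -> V_t) (Vs W U Y : nat -> 'I_3 -> {set V_t}),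
  [/\
   V 1%N = [set: V_t] /\
     (forall l, (1 <= l <= r)%N -> disjoint_union (V l) (level_parts r V v Vs l)),
   (forall i, (1 <= i <= r)%N -> forall j k : 'I_3, j != k -> A (v i j) (v i k)),
   (forall i, (1 <= i <= r)%N -> forall j : 'I_3,
      [set x in V i | A (v i j) x] :\: Rset v i = Vs i j),
   ((forall i, (1 <= i <= r)%N -> forall j : 'I_3,
      [/\ disjoint_union (Vs i j) [:: W i j; U i j; Y i j],
          pm_between (cross_edges A (W i j) (V i.+1)) (W i j) (V i.+1),
          pm_between (induced A (W i j :|: U i j)) (W i j) (U i j)
        & pm_of (induced A (Y i j)) (Y i j)]) /\
   C4_saturated_in (induced G (V r.+1)) (induced A (V r.+1))) &
   (forall x y, A x y ->
      [\/ exists i (j k : 'I_3), [/\ (1 <= i <= r)%N, x = v i j & y = v i k],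
          exists i (j : 'I_3), (1 <= i <= r)%N /\
             ((x = v i j /\ y \in Vs i j) \/ (y = v i j /\ x \in Vs i j)),
          exists i (j : 'I_3), (1 <= i <= r)%N /\
             [\/ cross_edges A (W i j) (V i.+1) x y,
                 induced A (W i j :|: U i j) x y
               | induced A (Y i j) x y]
        | induced A (V r.+1) x y])].

End Flower.

(* Main.v *)
Require Import Defs.
From mathcomp Require Import all_boot all_order all_algebra.
From mathcomp Require Import zify lra.
Set Implicit Arguments. Unset Strict Implicit. Unset Printing Implicit Defensive.

Section Gen.
Variable T : finType.

Lemma mem_bigcup_seq (s : seq {set T}) x :
  (x \in \bigcup_(X <- s) X) = has (fun X : {set T} => x \in X) s.
Proof. elim: s => [|X s IH]; first by rewrite big_nil in_set0. by rewrite big_cons in_setU IH. Qed.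

Lemma disj_nth (S : {set T}) s a b x : disjoint_union S s -> a != b ->
  a < size s -> b < size s -> x \in nth set0 s a -> x \in nth set0 s b -> False.
Proof.
move=> [_ Hd] ab ha hb xa xb.
case: (ltngtP a b) ab => // hab _.
- by move: (Hd a b) => /(_ (introT andP (conj hab hb))) /disjointFr /(_ xa); rewrite xb.
- by move: (Hd b a) => /(_ (introT andP (conj hab ha))) /disjointFr /(_ xb); rewrite xa.
Qed.

Lemma card_pairs (P : T -> T -> bool) :
  #|[set p : T * T | P p.1 p.2]| = \sum_x #|[set y | P x y]|.
Proof.
have E (Q : pred (T * T)) : #|[set p | Q p]| = \sum_p (Q p : nat).
  by rewrite -sum1_card big_mkcond /=; apply: eq_bigr => p _; rewrite inE; case: (Q p).
have E1 (Q : pred T) : #|[set p | Q p]| = \sum_p (Q p : nat).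
  by rewrite -sum1_card big_mkcond /=; apply: eq_bigr => p _; rewrite inE; case: (Q p).
rewrite E -(pair_big xpredT xpredT (fun x y => (P x y : nat))) /=.
by apply: eq_bigr => x _; rewrite E1.
Qed.

Lemma nedges2 (B : rel T) : (forall x y, B x y = B y x) -> (forall x, ~~ B x x) ->
  (nedges B).*2 = #|[set p : T * T | B p.1 p.2]|.
Proof.
move=> Bs Bi.
set S1 := [set p : T * T | (enum_rank p.1 < enum_rank p.2)%N && B p.1 p.2].
set S2 := [set p : T * T | (enum_rank p.2 < enum_rank p.1)%N && B p.1 p.2].
have eS : [set p : T * T | B p.1 p.2] = S1 :|: S2.
  apply/setP => [[x y]]; rewrite !inE /=.
  case Bxy: (B x y); rewrite ?andbF // !andbT.
  case: (ltngtP (enum_rank x) (enum_rank y)) => // /val_inj /enum_rank_inj exy.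
  by move: (Bi x); rewrite {2}exy Bxy.
have e2 : S2 = [set (p.2, p.1) | p in S1].
  apply/setP => [[x y]]; rewrite !inE /=; apply/idP/imsetP.
  - by move=> h; exists (y, x); rewrite // inE /= Bs.
  - by move=> [[a b]]; rewrite inE /= => h [-> ->]; rewrite Bs.
have c2 : #|S2| = #|S1|.
  by rewrite e2 card_imset // => [[a b]] [c d] /= [-> ->].
have I0 : S1 :&: S2 = set0.
  apply/setP => [[x y]]; rewrite !inE /=.
  by case: (ltngtP (enum_rank x) (enum_rank y)); rewrite ?andbF.
by rewrite eS cardsU I0 cards0 subn0 c2 addnn.
Qed.

Lemma cardsUd (S1 S2 : {set T}) : (forall z, z \in S1 -> z \in S2 -> False) ->
  #|S1 :|: S2| = #|S1| + #|S2|.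
Proof.
move=> h; rewrite cardsU; suff -> : S1 :&: S2 = set0 by rewrite cards0 subn0.
by apply/setP => z; rewrite !inE; apply/negP => /andP[a b]; apply: (h z).
Qed.

Lemma bigUd (S1 S2 : {set T}) (F : T -> nat) : (forall z, z \in S1 -> z \in S2 -> False) ->
  \sum_(x in S1 :|: S2) F x = \sum_(x in S1) F x + \sum_(x in S2) F x.
Proof.
move=> h; rewrite (big_setID S1) /=.
have -> : (S1 :|: S2) :&: S1 = S1 by apply/setP => z; rewrite !inE; case: (z \in S1); rewrite ?andbT ?andbF.
congr (_ + _); apply: eq_bigl => z; rewrite !inE.
case a: (z \in S1); case b: (z \in S2) => //=; exfalso; exact: (h z).
Qed.

Lemma sum_ind (X : {set T}) : \sum_x (x \in X : nat) = #|X|.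
Proof. by rewrite -sum1_card [RHS]big_mkcond; apply: eq_bigr => x _; case: (x \in X). Qed.

Lemma pm_card (F : rel T) X Y : (forall x y, F x y = F y x) -> pm_between F X Y ->
  (forall z, z \in X -> z \in Y -> False) -> #|X| = #|Y|.
Proof.
move=> Fs [hl hc] dXY.
have cnt (Z : {set T}) : Z \subset X :|: Y -> #|[set p : T * T | (p.1 \in Z) && F p.1 p.2]| = #|Z|.
  move=> sZ; rewrite (card_pairs (fun x y => (x \in Z) && F x y)) -(sum_ind Z); apply: eq_bigr => x _.
  case xZ: (x \in Z) => /=.
    by rewrite -(hc x (subsetP sZ x xZ)); apply: eq_card => y; rewrite !inE.
  by apply/eqP; rewrite cards_eq0; apply/eqP/setP => y; rewrite !inE.
rewrite -(cnt X) ?subsetUl // -(cnt Y) ?subsetUr //.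
set PX := [set p : T * T | (p.1 \in X) && F p.1 p.2].
rewrite -(card_imset PX (f := fun p : T * T => (p.2, p.1))); last by move=> [a b] [c d] /= [-> ->].
apply: eq_card => -[a b]; rewrite [in RHS]inE /=; apply/imsetP/idP.
- move=> [[c d]]; rewrite inE /= => /andP[cX Fcd] [-> ->]; rewrite Fs Fcd andbT.
  by move: (hl _ _ Fcd) => /orP[/andP[_ ->]|/andP[cY _]] //; exfalso; apply: (dXY c).
- move=> /andP [aY Fab]; exists (b, a) => //; rewrite inE /= Fs Fab andbT.
  by move: (hl _ _ Fab) => /orP[/andP[aX _]|/andP[_ ->]] //; exfalso; apply: (dXY a).
Qed.

End Gen.

Lemma size_flat4 (T : Type) (f : nat -> seq T) s : (forall i, size (f i) = 4) ->
  size (flatten (map f s)) = 4 * size s.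
Proof. move=> hf; elim: s => [|i s IH] //=; rewrite size_cat IH hf; lia. Qed.

Lemma nth_flat4 (T : Type) (x0 : T) (f : nat -> seq T) s a k : (forall i, size (f i) = 4) ->
  a < size s -> k < 4 -> nth x0 (flatten (map f s)) (4 * a + k) = nth x0 (f (nth 0 s a)) k.
Proof.
move=> hf; elim: s a => [|i s IH] [|a] //= ha hk; rewrite nth_cat hf.
  by rewrite muln0 add0n hk.
have -> : (4 * a.+1 + k < 4) = false by lia.
have -> : 4 * a.+1 + k - 4 = 4 * a + k by lia.
by apply: IH.
Qed.

Section Flower.
Variables (n : nat) (G A : rel 'I_n) (r : nat) (V : nat -> {set 'I_n}).
Variables (v : nat -> 'I_3 -> 'I_n) (Vs W U Y : nat -> 'I_3 -> {set 'I_n}).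
Hypothesis HGsym : forall x y, G x y = G y x.
Hypothesis HGirr : forall x, ~~ G x x.
Hypothesis HAsym : forall x y, A x y = A y x.
Hypothesis HAG : forall x y, A x y -> G x y.
Hypothesis H1a : V 1 = [set: 'I_n].
Hypothesis H1b : forall l, 1 <= l <= r -> disjoint_union (V l) (level_parts r V v Vs l).
Hypothesis H2 : forall i, 1 <= i <= r -> forall j k : 'I_3, j != k -> A (v i j) (v i k).
Hypothesis H3 : forall i, 1 <= i <= r -> forall j : 'I_3,
      [set x in V i | A (v i j) x] :\: Rset v i = Vs i j.
Hypothesis H4 : forall i, 1 <= i <= r -> forall j : 'I_3,
      [/\ disjoint_union (Vs i j) [:: W i j; U i j; Y i j],
          pm_between (cross_edges A (W i j) (V i.+1)) (W i j) (V i.+1),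
          pm_between (induced A (W i j :|: U i j)) (W i j) (U i j)
        & pm_of (induced A (Y i j)) (Y i j)].
Hypothesis H5 : C4_saturated_in (induced G (V r.+1)) (induced A (V r.+1)).
Hypothesis H6 : forall x y, A x y ->
      [\/ exists i (j k : 'I_3), [/\ (1 <= i <= r)%N, x = v i j & y = v i k],
          exists i (j : 'I_3), (1 <= i <= r)%N /\
             ((x = v i j /\ y \in Vs i j) \/ (y = v i j /\ x \in Vs i j)),
          exists i (j : 'I_3), (1 <= i <= r)%N /\
             [\/ cross_edges A (W i j) (V i.+1) x y,
                 induced A (W i j :|: U i j) x y
               | induced A (Y i j) x y]
        | induced A (V r.+1) x y].

Definition chunk i := [:: Rset v i; Vs i (inord 0); Vs i (inord 1); Vs i (inord 2)].
Definition part i k := nth set0 (chunk i) k.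

Lemma lp_eq l : level_parts r V v Vs l = V r.+1 :: flatten (map chunk (iota l (r.+1 - l))).
Proof. by []. Qed.

Lemma lp_size l : size (level_parts r V v Vs l) = 1 + 4 * (r.+1 - l).
Proof. by rewrite lp_eq /= size_flat4 // size_iota. Qed.

Lemma lp_nth l i k : l <= i <= r -> k < 4 ->
  nth set0 (level_parts r V v Vs l) (1 + 4 * (i - l) + k) = part i k.
Proof.
move=> hi hk; rewrite lp_eq -addnA /= nth_flat4 // ?size_iota; last by lia.
by rewrite nth_iota; [congr part; lia | lia].
Qed.

Lemma memV l x : 1 <= l <= r -> (x \in V l) <->
  (x \in V r.+1 \/ exists i k, [/\ l <= i <= r, k < 4 & x \in part i k]).
Proof.
move=> hl; have [-> _] := H1b hl; rewrite mem_bigcup_seq; split.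
- move/(has_nthP set0) => [[|m]]; first by left.
  rewrite lp_size => hm hx; right.
  exists (l + m %/ 4), (m %% 4); split; [lia| by rewrite ltn_mod |].
  rewrite -(lp_nth (l := l)); [|lia| by rewrite ltn_mod].
  have e := divn_eq m 4.
  by have -> : 1 + 4 * (l + m %/ 4 - l) + m %% 4 = m.+1 by lia.
- case=> [hx|[i [k [hi hk hx]]]]; apply/(has_nthP set0).
  + by exists 0; rewrite ?lp_size.
  + exists (1 + 4 * (i - l) + k); first by rewrite lp_size; lia.
    by rewrite lp_nth.
Qed.

Lemma partsD i k i' k' x : 1 <= i <= r -> 1 <= i' <= r -> k < 4 -> k' < 4 ->
  x \in part i k -> x \in part i' k' -> i = i' /\ k = k'.
Proof.
move=> hi hi' hk hk' h h'.
have hr : 1 <= 1 <= r by lia.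
case: (boolP ((i == i') && (k == k'))) => [/andP[/eqP -> /eqP ->] //|hne].
exfalso; apply: (disj_nth (H1b hr) (a := 1 + 4 * (i - 1) + k) (b := 1 + 4 * (i' - 1) + k') (x := x)).
- by apply/eqP; move: hne; rewrite negb_and => /orP[/eqP|/eqP]; lia.
- rewrite lp_size; lia.
- rewrite lp_size; lia.
- by rewrite lp_nth //; lia.
- by rewrite lp_nth //; lia.
Qed.

Lemma part_top i k x : 1 <= i <= r -> k < 4 -> x \in part i k -> x \in V r.+1 -> False.
Proof.
move=> hi hk h h'.
have hr : 1 <= 1 <= r by lia.
apply: (disj_nth (H1b hr) (a := 1 + 4 * (i - 1) + k) (b := 0) (x := x));
  rewrite ?lp_size ?lp_nth //; lia.
Qed.


Lemma part0 i : part i 0 = Rset v i.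
Proof. by []. Qed.

Lemma partS i (j : 'I_3) : part i j.+1 = Vs i j.
Proof. by case: j => [[|[|[|j]]] hj] //=; congr Vs; apply: val_inj; rewrite /= inordK. Qed.

Lemma Rset_v i j : v i j \in Rset v i.
Proof.
rewrite !inE; case: j => [[|[|[|j]]] hj] //=.
- by rewrite (_ : Ordinal hj = inord 0) ?eqxx //; apply: val_inj; rewrite /= inordK.
- by rewrite (_ : Ordinal hj = inord 1) ?eqxx ?orbT //; apply: val_inj; rewrite /= inordK.
- by rewrite (_ : Ordinal hj = inord 2) ?eqxx ?orbT //; apply: val_inj; rewrite /= inordK.
Qed.

Lemma RsetP i x : x \in Rset v i -> exists j, x = v i j.
Proof. by rewrite !inE -?orbA => /or3P [] /eqP ->; eexists. Qed.

Lemma memV' l x : 1 <= l <= r.+1 -> (x \in V l) <->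
  (x \in V r.+1 \/ exists i k, [/\ l <= i <= r, k < 4 & x \in part i k]).
Proof.
move=> hl; case: (ltnP l r.+1) => hlr; first by apply: memV; lia.
have -> : l = r.+1 by lia.
split; [by left | case => // [[i [k [hi _ _]]]]; lia].
Qed.

Lemma Vmono l l' x : 1 <= l <= l' -> l' <= r.+1 -> x \in V l' -> x \in V l.
Proof.
move=> hl hl' hx; have hl1 : 1 <= l' <= r.+1 by lia.
have hl2 : 1 <= l <= r.+1 by lia.
case: ((memV' x hl1).1 hx) => [ht|[i [k [hi hk hx']]]]; apply/(memV' x hl2).
  by left.
by right; exists i, k; split => //; lia.
Qed.

Lemma part_in i k x : 1 <= i <= r -> k < 4 -> x \in part i k -> x \in V i.
Proof. move=> hi hk hx; apply/memV; rewrite ?hi //; right; exists i, k; split => //; lia. Qed.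

Lemma part_out i k l x : 1 <= i <= r -> k < 4 -> x \in part i k -> i < l <= r.+1 ->
  x \in V l -> False.
Proof.
move=> hi hk hx hl xl; have hl1 : 1 <= l <= r.+1 by lia.
case: ((memV' x hl1).1 xl) => [ht|[i' [k' [hi' hk' hx']]]].
  exact: (part_top hi hk hx ht).
have [] := partsD hi (_ : 1 <= i' <= r) hk hk' hx hx'; lia.
Qed.

Lemma lvl_cmp i k l x : 1 <= i <= r -> k < 4 -> x \in part i k -> 1 <= l <= r ->
  x \in V l -> i = l \/ (l < i /\ x \in V l.+1).
Proof.
move=> hi hk hx hl xl.
case: (ltngtP i l) => h.
- by exfalso; apply: (part_out hi hk hx _ xl); lia.
- right; split => //; apply: (Vmono (l' := i)); try lia; exact: part_in hx.
- by left.
Qed.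

Lemma Vsplit l x : 1 <= l <= r -> (x \in V l) <-> (x \in V l.+1 \/ exists k, k < 4 /\ x \in part l k).
Proof.
move=> hl; split.
- move/memV => [//|ht|[i [k [hi hk hx]]]]; first by left; apply: (Vmono (l' := r.+1)) => //; lia.
  case: (ltngtP l i) => h; try lia.
  + left; apply/memV'; first lia. by right; exists i, k; split => //; lia.
  + by right; exists k; subst.
- case=> [h|[k [hk hx]]]; first by apply: (Vmono (l' := l.+1)) => //; lia.
  exact: part_in hx.
Qed.

Lemma VsP i j x : 1 <= i <= r -> x \in Vs i j -> (x \in W i j) || (x \in U i j) || (x \in Y i j).
Proof.
move=> hi; have [[[e _] _ _ _]] := H4 hi j; rewrite e mem_bigcup_seq /=; by rewrite orbF orbA.
Qed.

Lemma W_Vs i j x : 1 <= i <= r -> x \in W i j -> x \in Vs i j.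
Proof. move=> hi; have [[[e _] _ _ _]] := H4 hi j; by rewrite e mem_bigcup_seq /= => ->. Qed.
Lemma U_Vs i j x : 1 <= i <= r -> x \in U i j -> x \in Vs i j.
Proof. move=> hi; have [[[e _] _ _ _]] := H4 hi j; by rewrite e mem_bigcup_seq /= => ->; rewrite orbT. Qed.
Lemma Y_Vs i j x : 1 <= i <= r -> x \in Y i j -> x \in Vs i j.
Proof. move=> hi; have [[[e _] _ _ _]] := H4 hi j; by rewrite e mem_bigcup_seq /= => ->; rewrite !orbT. Qed.

Lemma WUY_disj i j x : 1 <= i <= r ->
  [/\ x \in W i j -> x \in U i j -> False, x \in W i j -> x \in Y i j -> False
    & x \in U i j -> x \in Y i j -> False].
Proof.
move=> hi; have [du _ _ _] := H4 hi j.
split => h1 h2.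
- exact: (@disj_nth _ _ _ 0 1 x du isT isT isT h1 h2).
- exact: (@disj_nth _ _ _ 0 2 x du isT isT isT h1 h2).
- exact: (@disj_nth _ _ _ 1 2 x du isT isT isT h1 h2).
Qed.

End Flower.

Section PM.
Variable T : finType.
Lemma pmb_uniq (F : rel T) X Y x y z : pm_between F X Y -> F x y -> F x z -> y = z.
Proof.
move=> [hl hc] h1 h2.
have hx : x \in X :|: Y by rewrite in_setU; move: (hl _ _ h1) => /orP[/andP[-> _]|/andP[-> _]]; rewrite ?orbT.
move: (hc x hx) => /eqP/cards1P [a ea].
have : y \in [set y | F x y] by rewrite inE.
have : z \in [set y | F x y] by rewrite inE.
by rewrite ea !inE => /eqP -> /eqP ->.
Qed.
Lemma pmb_ex (F : rel T) X Y x : pm_between F X Y -> x \in X :|: Y -> exists y, F x y.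
Proof.
move=> [_ hc] hx; move: (hc x hx) => /eqP/cards1P [a ea].
exists a; have : a \in [set y | F x y] by rewrite ea inE.
by rewrite inE.
Qed.
Lemma pmo_uniq (F : rel T) X x y z : pm_of F X -> F x y -> F x z -> y = z.
Proof.
move=> [hl hc] h1 h2.
have hx : x \in X by move: (hl _ _ h1) => /andP[].
move: (hc x hx) => /eqP/cards1P [a ea].
have : y \in [set y | F x y] by rewrite inE.
have : z \in [set y | F x y] by rewrite inE.
by rewrite ea !inE => /eqP -> /eqP ->.
Qed.
Lemma pmo_ex (F : rel T) X x : pm_of F X -> x \in X -> exists y, F x y.
Proof.
move=> [_ hc] hx; move: (hc x hx) => /eqP/cards1P [a ea].
exists a; have : a \in [set y | F x y] by rewrite ea inE.
by rewrite inE.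
Qed.
End PM.

Section Flower2.
Variables (n : nat) (G A : rel 'I_n) (r : nat) (V : nat -> {set 'I_n}).
Variables (v : nat -> 'I_3 -> 'I_n) (Vs W U Y : nat -> 'I_3 -> {set 'I_n}).
Hypothesis HGsym : forall x y, G x y = G y x.
Hypothesis HGirr : forall x, ~~ G x x.
Hypothesis HAsym : forall x y, A x y = A y x.
Hypothesis HAG : forall x y, A x y -> G x y.
Hypothesis H1a : V 1 = [set: 'I_n].
Hypothesis H1b : forall l, 1 <= l <= r -> disjoint_union (V l) (level_parts r V v Vs l).
Hypothesis H2 : forall i, 1 <= i <= r -> forall j k : 'I_3, j != k -> A (v i j) (v i k).
Hypothesis H3 : forall i, 1 <= i <= r -> forall j : 'I_3,
      [set x in V i | A (v i j) x] :\: Rset v i = Vs i j.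
Hypothesis H4 : forall i, 1 <= i <= r -> forall j : 'I_3,
      [/\ disjoint_union (Vs i j) [:: W i j; U i j; Y i j],
          pm_between (cross_edges A (W i j) (V i.+1)) (W i j) (V i.+1),
          pm_between (induced A (W i j :|: U i j)) (W i j) (U i j)
        & pm_of (induced A (Y i j)) (Y i j)].
Hypothesis H5 : C4_saturated_in (induced G (V r.+1)) (induced A (V r.+1)).
Hypothesis H6 : forall x y, A x y ->
      [\/ exists i (j k : 'I_3), [/\ (1 <= i <= r)%N, x = v i j & y = v i k],
          exists i (j : 'I_3), (1 <= i <= r)%N /\
             ((x = v i j /\ y \in Vs i j) \/ (y = v i j /\ x \in Vs i j)),
          exists i (j : 'I_3), (1 <= i <= r)%N /\
             [\/ cross_edges A (W i j) (V i.+1) x y,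
                 induced A (W i j :|: U i j) x y
               | induced A (Y i j) x y]
        | induced A (V r.+1) x y].

Local Notation memV' := (memV' H1b).
Local Notation Vmono := (Vmono H1b).
Local Notation part_in := (part_in H1b).
Local Notation part_out := (part_out H1b).
Local Notation lvl_cmp := (lvl_cmp H1b).
Local Notation Vsplit := (Vsplit H1b).
Local Notation partsD := (partsD H1b).
Local Notation VsP := (VsP H4).
Local Notation W_Vs := (W_Vs H4).
Local Notation U_Vs := (U_Vs H4).
Local Notation Y_Vs := (Y_Vs H4).
Local Notation WUY_disj := (WUY_disj H4).

Lemma Ainv x : ~~ A x x.
Proof. by apply/negP => /HAG; apply/negP. Qed.

Lemma R_part l x : x \in Rset v l -> x \in part v Vs l 0.
Proof. by []. Qed.
Lemma Vs_part l j x : x \in Vs l j -> x \in part v Vs l j.+1.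
Proof. by rewrite partS. Qed.

Lemma R_V l x : 1 <= l <= r -> x \in Rset v l -> x \in V l.
Proof. by move=> hl hx; exact: (part_in hl (isT : 0 < 4) (R_part hx)). Qed.
Lemma Vs_V l j x : 1 <= l <= r -> x \in Vs l j -> x \in V l.
Proof. by move=> hl hx; exact: (part_in hl (ltn_ord j : j.+1 < 4) (Vs_part hx)). Qed.
Lemma R_N l x : 1 <= l <= r -> x \in Rset v l -> x \in V l.+1 -> False.
Proof. move=> hl hx hN; apply: (part_out hl (isT : 0 < 4) (R_part hx) _ hN); lia. Qed.
Lemma Vs_N l j x : 1 <= l <= r -> x \in Vs l j -> x \in V l.+1 -> False.
Proof. move=> hl hx hN; apply: (part_out hl (ltn_ord j : j.+1 < 4) (Vs_part hx) _ hN); lia. Qed.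
Lemma R_Vs l j x : 1 <= l <= r -> x \in Rset v l -> x \in Vs l j -> False.
Proof. move=> hl h1 h2; by have [_] := partsD hl hl (isT : 0 < 4) (ltn_ord j : j.+1 < 4) (R_part h1) (Vs_part h2). Qed.
Lemma Vs_Vs l j j' x : 1 <= l <= r -> x \in Vs l j -> x \in Vs l j' -> j = j'.
Proof.
move=> hl h1 h2; have [_ e] := partsD hl hl (ltn_ord j : j.+1 < 4) (ltn_ord j' : j'.+1 < 4) (Vs_part h1) (Vs_part h2).
by apply: val_inj; case: e.
Qed.

Local Notation cross l j := (cross_edges A (W l j) (V l.+1)).
Local Notation WU l j := (induced A (W l j :|: U l j)).
Local Notation YE l j := (induced A (Y l j)).

Lemma ind_sym S x y : induced A S x y = induced A S y x.
Proof. by rewrite /induced HAsym (andbC (x \in S)). Qed.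
Lemma cross_sym l j x y : cross l j x y = cross l j y x.
Proof. by rewrite /cross_edges ind_sym; congr (_ && ~~ _); apply: andbC. Qed.
Lemma ind_A S x y : induced A S x y -> A x y.
Proof. by case/and3P. Qed.
Lemma ind_in S x y : induced A S x y -> x \in S /\ y \in S.
Proof. by case/and3P. Qed.
Lemma cross_A l j x y : cross l j x y -> A x y.
Proof. by case/andP => /ind_A. Qed.

Lemma cross_loc l j x y : 1 <= l <= r -> cross l j x y ->
  (x \in W l j /\ y \in V l.+1) \/ (x \in V l.+1 /\ y \in W l j).
Proof.
move=> hl h; have [_ [hb _] _ _] := H4 hl j.
by move: (hb _ _ h) => /orP[/andP[-> ->]|/andP[-> ->]]; [left|right].
Qed.
Lemma WU_loc l j x y : 1 <= l <= r -> WU l j x y ->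
  (x \in W l j /\ y \in U l j) \/ (x \in U l j /\ y \in W l j).
Proof.
move=> hl h; have [_ _ [hb _] _] := H4 hl j.
by move: (hb _ _ h) => /orP[/andP[-> ->]|/andP[-> ->]]; [left|right].
Qed.
Lemma YE_loc l j x y : 1 <= l <= r -> YE l j x y -> x \in Y l j /\ y \in Y l j.
Proof. by move=> hl /ind_in. Qed.

Lemma cross_uniq l j x y z : 1 <= l <= r -> cross l j x y -> cross l j x z -> y = z.
Proof. move=> hl; have [_ hb _ _] := H4 hl j; exact: pmb_uniq hb. Qed.
Lemma WU_uniq l j x y z : 1 <= l <= r -> WU l j x y -> WU l j x z -> y = z.
Proof. move=> hl; have [_ _ hb _] := H4 hl j; exact: pmb_uniq hb. Qed.
Lemma YE_uniq l j x y z : 1 <= l <= r -> YE l j x y -> YE l j x z -> y = z.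
Proof. move=> hl; have [_ _ _ hb] := H4 hl j; exact: pmo_uniq hb. Qed.
Lemma cross_ex l j x : 1 <= l <= r -> x \in W l j :|: V l.+1 -> exists y, cross l j x y.
Proof. move=> hl; have [_ hb _ _] := H4 hl j; exact: pmb_ex hb. Qed.
Lemma WU_ex l j x : 1 <= l <= r -> x \in W l j :|: U l j -> exists y, WU l j x y.
Proof. move=> hl; have [_ _ hb _] := H4 hl j; exact: pmb_ex hb. Qed.
Lemma YE_ex l j x : 1 <= l <= r -> x \in Y l j -> exists y, YE l j x y.
Proof. move=> hl; have [_ _ _ hb] := H4 hl j; exact: pmo_ex hb. Qed.

Lemma WU_sub l j x : 1 <= l <= r -> x \in W l j :|: U l j -> x \in Vs l j.
Proof. by move=> hl; rewrite in_setU => /orP[/(W_Vs hl)|/(U_Vs hl)]. Qed.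

Lemma lev_eq i l x y : 1 <= i <= r -> 1 <= l <= r ->
  (exists k, k < 4 /\ x \in part v Vs i k) -> (exists k, k < 4 /\ y \in part v Vs i k) ->
  x \in V l -> y \in V l -> ~ (x \in V l.+1 /\ y \in V l.+1) -> i = l.
Proof.
move=> hi hl [k [hk hx]] [k' [hk' hy]] xl yl nb.
case: (lvl_cmp hi hk hx hl xl) => // [[li xN]].
case: (lvl_cmp hi hk' hy hl yl) => // [[_ yN]].
by exfalso; apply: nb.
Qed.

Lemma inpart_R i j : exists k, k < 4 /\ v i j \in part v Vs i k.
Proof. by exists 0; split => //; apply: Rset_v. Qed.
Lemma inpart_Vs i j z : z \in Vs i j -> exists k, k < 4 /\ z \in part v Vs i k.
Proof. move=> h; exists j.+1; split; [exact: (ltn_ord j : j.+1 < 4) | by rewrite partS]. Qed.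

Lemma EC l x y : 1 <= l <= r -> A x y -> x \in V l -> y \in V l ->
  ~ (x \in V l.+1 /\ y \in V l.+1) ->
  [\/ exists (j k : 'I_3), x = v l j /\ y = v l k,
      exists j : 'I_3, (x = v l j /\ y \in Vs l j) \/ (y = v l j /\ x \in Vs l j)
    | exists j : 'I_3, [\/ cross l j x y, WU l j x y | YE l j x y]].
Proof.
move=> hl hA xl yl nb.
case: (H6 hA).
- move=> [i [j [k [hi ex ey]]]].
  have ei : i = l by apply: (lev_eq hi hl _ _ xl yl nb); [rewrite ex|rewrite ey]; apply: inpart_R.
  by subst; constructor 1; exists j, k.
- move=> [i [j [hi h]]].
  have ei : i = l.
    case: h => [][e h]; subst; apply: (lev_eq hi hl _ _ xl yl nb);
      by [apply: inpart_R | apply: inpart_Vs h].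
  by subst; constructor 2; exists j.
- move=> [i [j [hi h]]].
  have ei : i = l.
    case: h => h.
    + move: h => /andP [/ind_in [hx hy] hn].
      case: (ltngtP i l) => // c; exfalso.
      * move/negP: hn; apply; apply/andP; split; [apply: (Vmono _ _ xl)|apply: (Vmono _ _ yl)]; lia.
      * apply: nb; have sub z : z \in W i j :|: V i.+1 -> z \in V l.+1.
          rewrite in_setU => /orP [/(W_Vs hi)/(Vs_V hi)|] hz;
            apply: (Vmono _ _ hz); lia.
        by split; apply: sub.
    + move: h => /ind_in [hx hy].
      by apply: (lev_eq hi hl _ _ xl yl nb); [apply: (inpart_Vs (WU_sub hi hx)) | apply: (inpart_Vs (WU_sub hi hy))].
    + move: h => /ind_in [hx hy].
      by apply: (lev_eq hi hl _ _ xl yl nb); [apply: (inpart_Vs (Y_Vs hi hx)) | apply: (inpart_Vs (Y_Vs hi hy))].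
  by subst; constructor 3; exists j.
- move=> /ind_in [xt yt]; exfalso; apply: nb; split; [apply: (Vmono _ _ xt) | apply: (Vmono _ _ yt)]; lia.
Qed.

Definition Pt l j x y := [\/ cross l j x y, WU l j x y | YE l j x y].

Lemma Pt_A l j x y : Pt l j x y -> A x y.
Proof. by case=> [/cross_A|/ind_A|/ind_A]. Qed.
Lemma Pt_sym l j x y : Pt l j x y -> Pt l j y x.
Proof. by case=> h; [constructor 1; rewrite cross_sym | constructor 2; rewrite ind_sym | constructor 3; rewrite ind_sym]. Qed.

Lemma NB_v l j y : 1 <= l <= r -> y \in V l -> A (v l j) y ->
  (exists k, y = v l k) \/ y \in Vs l j.
Proof.
move=> hl yl hA; case: (boolP (y \in Rset v l)) => hy; first by left; apply: RsetP.
by right; rewrite -(H3 hl j) in_setD hy /= inE yl hA.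
Qed.

Lemma Vs_adj l j y : 1 <= l <= r -> y \in Vs l j -> A (v l j) y.
Proof. by move=> hl; rewrite -(H3 hl j) !inE => /andP [_ /andP[]]. Qed.

Lemma notVsN l j x : 1 <= l <= r -> x \in Vs l j -> x \in V l.+1 -> False.
Proof. exact: Vs_N. Qed.

Lemma NB_s l j x y : 1 <= l <= r -> x \in Vs l j -> y \in V l -> A x y ->
  y = v l j \/ Pt l j x y.
Proof.
move=> hl xs yl hA.
have xl := Vs_V hl xs.
case: (EC hl hA xl yl (fun h => Vs_N hl xs h.1)).
- by move=> [j1 [k [ex _]]]; exfalso; apply: (R_Vs hl _ xs); rewrite ex Rset_v.
- move=> [j1 [[ex _]|[ey xs1]]].
    by exfalso; apply: (R_Vs hl _ xs); rewrite ex Rset_v.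
  by left; rewrite ey (Vs_Vs hl xs1 xs).
- move=> [j1 h]; right.
  have ej : j1 = j.
    case: h => h.
    + case: (cross_loc hl h) => [[xw _]|[xn _]]; last by exfalso; apply: (Vs_N hl xs xn).
      exact: (Vs_Vs hl (W_Vs hl xw) xs).
    + exact: (Vs_Vs hl (WU_sub hl (ind_in h).1) xs).
    + exact: (Vs_Vs hl (Y_Vs hl (ind_in h).1) xs).
  by subst.
Qed.

Lemma NB_N l x y : 1 <= l <= r -> x \in V l.+1 -> y \in V l -> ~~ (y \in V l.+1) -> A x y ->
  exists j, cross l j x y.
Proof.
move=> hl xn yl yn hA.
have xl : x \in V l by apply: (Vmono _ _ xn); lia.
case: (EC hl hA xl yl (fun h => negP yn h.2)).
- by move=> [j1 [k [ex _]]]; exfalso; apply: (R_N hl _ xn); rewrite ex Rset_v.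
- move=> [j1 [[ex _]|[_ xs1]]]; exfalso; last exact: (Vs_N hl xs1 xn).
  by apply: (R_N hl _ xn); rewrite ex Rset_v.
- move=> [j1 [h|h|h]]; first by exists j1.
  + by exfalso; apply: (Vs_N hl (WU_sub hl (ind_in h).1) xn).
  + by exfalso; apply: (Vs_N hl (Y_Vs hl (ind_in h).1) xn).
Qed.

Lemma Pt_loc l j x y : 1 <= l <= r -> x \in Vs l j -> Pt l j x y -> y \in Vs l j \/ y \in V l.+1.
Proof.
move=> hl xs [h|h|h].
- by case: (cross_loc hl h) => [[_ ->]|[xn _]]; [right | exfalso; apply: (Vs_N hl xs xn)].
- by left; apply: (WU_sub hl (ind_in h).2).
- by left; apply: (Y_Vs hl (ind_in h).2).
Qed.

Lemma Pt_U l j b c : 1 <= l <= r -> b \in U l j -> Pt l j b c -> WU l j b c.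
Proof.
move=> hl bu [h|h|h] //.
- case: (cross_loc hl h) => [[bw _]|[bn _]]; exfalso.
    by case: (WUY_disj j b hl) => /(_ bw bu).
  by apply: (Vs_N hl (U_Vs hl bu) bn).
- by case: (WUY_disj j b hl) => _ _ /(_ bu (ind_in h).1).
Qed.

Lemma Pt_uniq_in l j b d c : 1 <= l <= r -> b \in Vs l j -> d \in Vs l j ->
  Pt l j c b -> Pt l j c d -> b = d.
Proof.
move=> hl bs ds h1 h2.
have cN_cross z : z \in Vs l j -> cross l j c z -> c \in V l.+1.
  move=> zs h; case: (cross_loc hl h) => [[_ zn]|[-> //]].
  by exfalso; apply: (Vs_N hl zs zn).
case: h1 => h1; case: h2 => h2.
- exact: (cross_uniq hl h1 h2).
- by exfalso; apply: (Vs_N hl (WU_sub hl (ind_in h2).1) (cN_cross _ bs h1)).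
- by exfalso; apply: (Vs_N hl (Y_Vs hl (ind_in h2).1) (cN_cross _ bs h1)).
- by exfalso; apply: (Vs_N hl (WU_sub hl (ind_in h1).1) (cN_cross _ ds h2)).
- exact: (WU_uniq hl h1 h2).
- exfalso; have cy := (ind_in h2).1; have := (ind_in h1).1; rewrite in_setU => /orP [] cw.
    by case: (WUY_disj j c hl) => _ /(_ cw cy).
  by case: (WUY_disj j c hl) => _ _ /(_ cw cy).
- by exfalso; apply: (Vs_N hl (Y_Vs hl (ind_in h1).1) (cN_cross _ ds h2)).
- exfalso; have cy := (ind_in h1).1; have := (ind_in h2).1; rewrite in_setU => /orP [] cw.
    by case: (WUY_disj j c hl) => _ /(_ cw cy).
  by case: (WUY_disj j c hl) => _ _ /(_ cw cy).
- exact: (YE_uniq hl h1 h2).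
Qed.

Lemma Pt_two l j a b d : 1 <= l <= r -> a \in Vs l j -> Pt l j a b -> Pt l j a d -> b != d ->
  (WU l j a b /\ b \in U l j /\ cross l j a d) \/ (WU l j a d /\ d \in U l j /\ cross l j a b).
Proof.
move=> hl as_ h1 h2 bd.
have aW z : cross l j a z -> a \in W l j.
  by move=> h; case: (cross_loc hl h) => [[-> _]|[an _]] //; exfalso; apply: (Vs_N hl as_ an).
have WUu z : WU l j a z -> a \in W l j -> z \in U l j.
  move=> h aw; case: (WU_loc hl h) => [[_ ->]|[au _]] //.
  by exfalso; case: (WUY_disj j a hl) => /(_ aw au).
have noY z z' : YE l j a z -> (cross l j a z' \/ WU l j a z') -> False.
  move=> hy; have ay := (ind_in hy).1; case=> h.
    by case: (WUY_disj j a hl) => _ /(_ (aW _ h) ay).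
  have := (ind_in h).1; rewrite in_setU => /orP [] aw.
    by case: (WUY_disj j a hl) => _ /(_ aw ay).
  by case: (WUY_disj j a hl) => _ _ /(_ aw ay).
case: h1 => h1; case: h2 => h2.
- by rewrite (cross_uniq hl h1 h2) eqxx in bd.
- by right; split => //; split => //; apply: (WUu _ h2 (aW _ h1)).
- by exfalso; apply: (noY _ _ h2 (or_introl h1)).
- by left; split => //; split => //; apply: (WUu _ h1 (aW _ h2)).
- by rewrite (WU_uniq hl h1 h2) eqxx in bd.
- by exfalso; apply: (noY _ _ h2 (or_intror h1)).
- by exfalso; apply: (noY _ _ h1 (or_introl h2)).
- by exfalso; apply: (noY _ _ h1 (or_intror h2)).
- by rewrite (YE_uniq hl h1 h2) eqxx in bd.
Qed.

Lemma Vs_partner l j x : 1 <= l <= r -> x \in Vs l j -> exists p, Pt l j x p /\ p \in Vs l j.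
Proof.
move=> hl xs; case/orP: (VsP hl xs) => [/orP[]|] hx.
- have hx' : x \in W l j :|: U l j by rewrite in_setU hx.
  have [p hp] := WU_ex hl hx'.
  by exists p; split; [constructor 2 | apply: (WU_sub hl (ind_in hp).2)].
- have hx' : x \in W l j :|: U l j by rewrite in_setU hx orbT.
  have [p hp] := WU_ex hl hx'.
  by exists p; split; [constructor 2 | apply: (WU_sub hl (ind_in hp).2)].
- have [p hp] := YE_ex hl hx.
  by exists p; split; [constructor 3 | apply: (Y_Vs hl (ind_in hp).2)].
Qed.

Lemma I3_cover (j k m t : 'I_3) : j != k -> j != m -> k != m -> [\/ t = j, t = k | t = m].
Proof.
move=> h1 h2 h3.
suff : [|| t == j, t == k | t == m] by case/or3P => /eqP; [constructor 1|constructor 2|constructor 3].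
move: h1 h2 h3.
by case: j => [[|[|[|j]]] hj] //; case: k => [[|[|[|k]]] hk] //; case: m => [[|[|[|m]]] hm] //;
  case: t => [[|[|[|t]]] ht].
Qed.

Lemma uniq4 (a b c d : 'I_n) : uniq [:: a; b; c; d] =
  [&& a != b, a != c, a != d, b != c, b != d & c != d].
Proof. by rewrite /= !inE !negb_or andbT -!andbA. Qed.

Lemma C4R l j a b c d : 1 <= l <= r -> uniq [:: a; b; c; d] ->
  A a b -> A b c -> A c d -> A d a -> b \in V l -> c \in V l -> d \in V l -> a = v l j -> False.
Proof.
move=> hl; rewrite uniq4 => /and5P [ab ac ad bc /andP[bd cd]] hab hbc hcd hda bl cl dl ea; subst a.
have hdc : A d c by rewrite HAsym.
have had : A (v l j) d by rewrite HAsym.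
case: (NB_v hl bl hab) => [[k eb]|bs]; case: (NB_v hl dl had) => [[m ed]|ds].
- subst b d.
  have jk : j != k by apply: contraNneq ab => ->.
  have jm : j != m by apply: contraNneq ad => ->.
  have km : k != m by apply: contraNneq bd => ->.
  case: (NB_v hl cl hbc) => [[t ec]|cs1]; case: (NB_v hl cl hdc) => [[t' ec']|cs2].
  + move: ac bc cd; rewrite ec; case: (I3_cover t jk jm km) => ->; by rewrite eqxx.
  + by apply: (R_Vs hl _ cs2); rewrite ec Rset_v.
  + by apply: (R_Vs hl _ cs1); rewrite ec' Rset_v.
  + by move: (Vs_Vs hl cs1 cs2) km => ->; rewrite eqxx.
- subst b.
  have jk : j != k by apply: contraNneq ab => ->.
  case: (NB_s hl ds cl hdc) => [ec|hp]; first by rewrite ec eqxx in ac.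
  case: (NB_v hl cl hbc) => [[t ec]|cs1]; case: (Pt_loc hl ds hp) => h.
  + by apply: (R_Vs hl _ h); rewrite ec Rset_v.
  + by apply: (R_N hl _ h); rewrite ec Rset_v.
  + by move: (Vs_Vs hl cs1 h) jk => ->; rewrite eqxx.
  + exact: (Vs_N hl cs1 h).
- subst d.
  have jm : j != m by apply: contraNneq ad => ->.
  case: (NB_s hl bs cl hbc) => [ec|hp]; first by rewrite ec eqxx in ac.
  case: (NB_v hl cl hdc) => [[t ec]|cs1]; case: (Pt_loc hl bs hp) => h.
  + by apply: (R_Vs hl _ h); rewrite ec Rset_v.
  + by apply: (R_N hl _ h); rewrite ec Rset_v.
  + by move: (Vs_Vs hl cs1 h) jm => ->; rewrite eqxx.
  + exact: (Vs_N hl cs1 h).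
- case: (NB_s hl bs cl hbc) => [ec|hp1]; first by rewrite ec eqxx in ac.
  case: (NB_s hl ds cl hdc) => [ec|hp2]; first by rewrite ec eqxx in ac.
  have := Pt_uniq_in hl bs ds (Pt_sym hp1) (Pt_sym hp2).
  by move=> e; rewrite e eqxx in bd.
Qed.

Lemma C4S l j a b c d : 1 <= l <= r -> uniq [:: a; b; c; d] ->
  A a b -> A b c -> A c d -> A d a -> b \in V l -> c \in V l -> d \in V l -> a \in Vs l j -> False.
Proof.
move=> hl u hab hbc hcd hda bl cl dl as_.
have al := Vs_V hl as_.
have u' := u; move: u'; rewrite uniq4 => /and5P [ab ac ad bc /andP[bd cd]].
have ba : b != a by rewrite eq_sym.
have ca : c != a by rewrite eq_sym.
have da : d != a by rewrite eq_sym.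
have cb : c != b by rewrite eq_sym.
have db : d != b by rewrite eq_sym.
have dc : d != c by rewrite eq_sym.
have rot1 : uniq [:: b; c; d; a] by rewrite uniq4 bc bd ba cd ca da.
have rot2 : uniq [:: c; d; a; b] by rewrite uniq4 cd ca cb da db ab.
have rot3 : uniq [:: d; a; b; c] by rewrite uniq4 da db dc ab ac bc.
case: (NB_s hl as_ bl hab) => [eb|p1].
  exact: (C4R hl rot1 hbc hcd hda hab cl dl al eb).
have hadd : A a d by rewrite HAsym.
case: (NB_s hl as_ dl hadd) => [ed|p2].
  exact: (C4R hl rot3 hda hab hbc hcd al bl cl ed).
case: (Pt_two hl as_ p1 p2 bd) => [[hw [bu _]]|[hw [du _]]].
- case: (NB_s hl (U_Vs hl bu) cl hbc) => [ec|p3].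
    exact: (C4R hl rot2 hcd hda hab hbc dl al bl ec).
  have hba : WU l j b a by rewrite ind_sym.
  have e := WU_uniq hl (Pt_U hl bu p3) hba.
  by rewrite e eqxx in ac.
- have hdc : A d c by rewrite HAsym.
  case: (NB_s hl (U_Vs hl du) cl hdc) => [ec|p3].
    exact: (C4R hl rot2 hcd hda hab hbc dl al bl ec).
  have hba : WU l j d a by rewrite ind_sym.
  have e := WU_uniq hl (Pt_U hl du p3) hba.
  by rewrite e eqxx in ac.
Qed.

Lemma Vcases l z : 1 <= l <= r -> z \in V l ->
  [\/ z \in V l.+1, z \in Rset v l | exists j, z \in Vs l j].
Proof.
move=> hl /(Vsplit z hl) [h|[[|k] [hk h]]]; first by constructor 1.
  by constructor 2.
constructor 3; exists (Ordinal (hk : k < 3)); by rewrite -(partS v Vs l (Ordinal (hk : k < 3))).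
Qed.

Lemma uniq_rot (a b c d : 'I_n) : uniq [:: a; b; c; d] -> uniq [:: b; c; d; a].
Proof.
rewrite !uniq4 => /and5P [ab ac ad bc /andP[bd cd]].
by rewrite bc bd cd (eq_sym b a) ab (eq_sym c a) ac (eq_sym d a) ad.
Qed.

Lemma C4D l a b c d : 1 <= l <= r -> uniq [:: a; b; c; d] ->
  A a b -> A b c -> A c d -> A d a -> a \in V l -> b \in V l -> c \in V l -> d \in V l ->
  ~~ (a \in V l.+1) -> False.
Proof.
move=> hl u hab hbc hcd hda al bl cl dl an.
case: (Vcases hl al) => [h|h|[j h]]; first by rewrite h in an.
  by case: (RsetP h) => j e; apply: (C4R hl u hab hbc hcd hda bl cl dl e).
exact: (C4S hl u hab hbc hcd hda bl cl dl h).
Qed.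

Lemma down (P : nat -> Prop) : P r.+1 -> (forall l, 1 <= l <= r -> P l.+1 -> P l) -> P 1.
Proof.
move=> h0 hs.
suff : forall k, k <= r -> P (r.+1 - k) by move/(_ r (leqnn r)); rewrite subSnn.
elim=> [|k IH] hk; first by rewrite subn0.
have e : r.+1 - k = (r - k).+1 by lia.
have -> : r.+1 - k.+1 = r - k by lia.
apply: hs; first lia.
by rewrite -e; apply: IH; lia.
Qed.

Definition C4in l := forall a b c d, uniq [:: a; b; c; d] -> A a b -> A b c -> A c d -> A d a ->
   a \in V l -> b \in V l -> c \in V l -> d \in V l -> False.

Lemma noC4 : ~ has_C4 A.
Proof.
move=> [a [b [c [d [u hab hbc hcd hda]]]]].
suff : C4in 1.
  by move/(_ a b c d u hab hbc hcd hda); rewrite H1a !inE; apply.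
apply: (@down C4in).
- move=> a' b' c' d' u' h1 h2 h3 h4 ha hb hc hd.
  have [_ nC _] := H5; apply: nC; exists a', b', c', d'; split => //; by apply/and3P.
- move=> l hl IH a' b' c' d' u' h1 h2 h3 h4 ha hb hc hd.
  case: (boolP (a' \in V l.+1)) => an; last exact: (C4D hl u' h1 h2 h3 h4 ha hb hc hd an).
  case: (boolP (b' \in V l.+1)) => bn; last exact: (C4D hl (uniq_rot u') h2 h3 h4 h1 hb hc hd ha bn).
  case: (boolP (c' \in V l.+1)) => cn; last exact: (C4D hl (uniq_rot (uniq_rot u')) h3 h4 h1 h2 hc hd ha hb cn).
  case: (boolP (d' \in V l.+1)) => dn; last exact: (C4D hl (uniq_rot (uniq_rot (uniq_rot u'))) h4 h1 h2 h3 hd ha hb hc dn).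
  exact: (IH a' b' c' d').
Qed.

Lemma path3 x a b y : A x a -> A a b -> A b y -> uniq [:: x; a; b; y] -> has_C4 (add_edge A x y).
Proof.
move=> h1 h2 h3 u; exists x, a, b, y; split => //; rewrite /add_edge ?h1 ?h2 ?h3 //.
by rewrite !eqxx orbT.
Qed.

Lemma path3' x a b y : A y a -> A a b -> A b x -> uniq [:: y; a; b; x] -> has_C4 (add_edge A x y).
Proof.
move=> h1 h2 h3 u; apply: (path3 (a := b) (b := a)); rewrite 1?HAsym //.
move: u; rewrite !uniq4 => /and5P [ya yb yx ab /andP[ax bx]].
by rewrite eq_sym bx eq_sym ax eq_sym yx eq_sym ab eq_sym yb eq_sym ya.
Qed.

Lemma v_inj l j k : 1 <= l <= r -> v l j = v l k -> j = k.
Proof.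
move=> hl e; apply/eqP; apply: contraT => jk.
by have := H2 hl jk; rewrite e (negbTE (Ainv _)).
Qed.

Lemma I3_third (j k : 'I_3) : j != k -> exists m, m != j /\ m != k.
Proof.
move=> jk.
suff : [exists m : 'I_3, (m != j) && (m != k)] by case/existsP => m /andP[]; exists m.
by move: jk; case: j => [[|[|[|j]]] hj] //; case: k => [[|[|[|k]]] hk] //= _; apply/existsP;
  [exists (inord 2) | exists (inord 1) | exists (inord 2) | exists (inord 0) | exists (inord 1) | exists (inord 0)];
  rewrite -!val_eqE /= inordK.
Qed.

Lemma nRR l j k : 1 <= l <= r -> j != k -> v l j != v l k.
Proof. by move=> hl jk; apply: contra jk => /eqP /(v_inj hl) ->. Qed.
Lemma nRVs l j k z : 1 <= l <= r -> z \in Vs l k -> v l j != z.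
Proof. by move=> hl hz; apply/eqP => e; apply: (R_Vs hl _ hz); rewrite -e Rset_v. Qed.
Lemma nRN l j z : 1 <= l <= r -> z \in V l.+1 -> v l j != z.
Proof. by move=> hl hz; apply/eqP => e; apply: (R_N hl _ hz); rewrite -e Rset_v. Qed.
Lemma nVsN l j w z : 1 <= l <= r -> w \in Vs l j -> z \in V l.+1 -> w != z.
Proof. by move=> hl hw hz; apply/eqP => e; apply: (Vs_N hl hw); rewrite e. Qed.

Lemma cross_N l j y : 1 <= l <= r -> y \in V l.+1 -> exists w, cross l j y w /\ w \in W l j.
Proof.
move=> hl yn; have yWN : y \in W l j :|: V l.+1 by rewrite in_setU yn orbT.
have [w hw] := cross_ex hl yWN.
exists w; split => //; case: (cross_loc hl hw) => [[yw _]|[_ //]].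
by exfalso; apply: (Vs_N hl (W_Vs hl yw) yn).
Qed.

Lemma sat_level l x y : 1 <= l <= r -> x \in V l -> ~~ (x \in V l.+1) -> y \in V l ->
  x != y -> ~~ A x y -> exists a b, [/\ A x a, A a b, A b y & uniq [:: x; a; b; y]].
Proof.
move=> hl xl xn yl xy nA.
case: (Vcases hl xl) => [h|xr|[j xs]]; first by rewrite h in xn.
- have [j ex] := RsetP xr; subst x.
  case: (Vcases hl yl) => [yn|yr|[j' ys]].
  + have [w [hw ww]] := cross_N j hl yn.
    have wWU : w \in W l j :|: U l j by rewrite in_setU ww.
    have [u hu] := WU_ex hl wWU.
    have uu : u \in U l j by case: (WU_loc hl hu) => [[_ ->]|[wu _]] //; case: (WUY_disj j w hl) => /(_ ww wu).
    have us := U_Vs hl uu; have ws := W_Vs hl ww.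
    exists u, w; split.
    * exact: Vs_adj.
    * by rewrite HAsym; apply: (ind_A hu).
    * by rewrite HAsym; apply: (cross_A hw).
    * rewrite uniq4 (nRVs _ hl us) (nRVs _ hl ws) xy (nVsN hl us yn) (nVsN hl ws yn) andbT /=.
      by rewrite andbT; apply/eqP => e; rewrite e in uu; case: (WUY_disj j w hl) => /(_ ww uu).
  + have [k ey] := RsetP yr; subst y.
    have jk : j != k by apply: contra xy => /eqP ->.
    by rewrite (H2 hl jk) in nA.
  + case: (eqVneq j' j) => [e|jj]; first by subst j'; rewrite (Vs_adj hl ys) in nA.
    have [m [mj mj']] := I3_third jj.
    exists (v l m), (v l j'); split.
    * by apply: H2; rewrite // eq_sym.
    * exact: H2.
    * exact: Vs_adj.
      have jm : j != m by rewrite eq_sym.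
      have jj' : j != j' by rewrite eq_sym.
      by rewrite uniq4 (nRR hl jm) (nRR hl jj') xy (nRR hl mj) !(nRVs _ hl ys).
- have xs' := xs.
  case: (Vcases hl yl) => [yn|yr|[j' ys]].
  + have [w [hw ww]] := cross_N j hl yn.
    have ws := W_Vs hl ww.
    exists (v l j), w; split.
    * by rewrite HAsym; apply: Vs_adj.
    * exact: Vs_adj.
    * by rewrite HAsym; apply: (cross_A hw).
    * rewrite uniq4 xy (nRVs _ hl ws) (nRN _ hl yn) (nVsN hl ws yn) !andbT eq_sym (nRVs _ hl xs) /=.
      by apply/eqP => e; subst w; move/cross_A: hw; rewrite HAsym (negbTE nA).
  + have [k ey] := RsetP yr; subst y.
    case: (eqVneq k j) => [e|kj]; first by subst k; rewrite HAsym (Vs_adj hl xs) in nA.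
    have [m [mk mj]] := I3_third kj.
    exists (v l j), (v l m); split.
    * by rewrite HAsym; apply: Vs_adj.
    * by apply: H2; rewrite // eq_sym.
    * exact: H2.
    * have jm : j != m by rewrite eq_sym.
      have jk : j != k by rewrite eq_sym.
      by rewrite uniq4 !(eq_sym x) !(nRVs _ hl xs) (nRR hl jm) (nRR hl jk) (nRR hl mk).
  + case: (eqVneq j' j) => [e|jj].
    * subst j'.
      have [p [hp ps]] := Vs_partner hl xs.
      exists p, (v l j); split.
      -- exact: (Pt_A hp).
      -- by rewrite HAsym; apply: Vs_adj.
      -- exact: Vs_adj.
      -- have xp : x != p by apply/eqP => e; subst p; move/Pt_A: hp; rewrite (negbTE (Ainv x)).
         have py : p != y by apply/eqP => e; subst p; move/Pt_A: hp; rewrite (negbTE nA).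
         by rewrite uniq4 xp xy py (eq_sym x) (nRVs _ hl xs) (eq_sym p) (nRVs _ hl ps) (nRVs _ hl ys).
    * exists (v l j), (v l j'); split.
      -- by rewrite HAsym; apply: Vs_adj.
      -- by apply: H2; rewrite // eq_sym.
      -- exact: Vs_adj.
      -- have jj' : j != j' by rewrite eq_sym.
         by rewrite uniq4 xy !(eq_sym x) !(nRVs _ hl xs) (nRR hl jj') !(nRVs _ hl ys).
Qed.

Lemma C4_mono (R1 R2 : rel 'I_n) : (forall a b, R1 a b -> R2 a b) -> has_C4 R1 -> has_C4 R2.
Proof. by move=> h [a [b [c [d [u h1 h2 h3 h4]]]]]; exists a, b, c, d; split; auto. Qed.

Definition SATin l := forall x y, x \in V l -> y \in V l -> G x y -> ~~ A x y ->
  has_C4 (add_edge A x y).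

Lemma sat x y : G x y -> ~~ A x y -> has_C4 (add_edge A x y).
Proof.
suff : SATin 1 by move/(_ x y); rewrite H1a !inE; apply.
apply: (@down SATin).
- move=> a b ha hb hG hA; have [_ _ s5] := H5.
  have hG' : induced G (V r.+1) a b by apply/and3P.
  have hA' : ~~ induced A (V r.+1) a b by apply: contra hA => /ind_A.
  apply: (C4_mono _ (s5 _ _ hG' hA')) => p q; rewrite /add_edge.
  by case/orP => [/orP[/ind_A -> //|->]|->]; rewrite ?orbT.
- move=> l hl IH a b ha hb hG hA.
  have ab : a != b by apply: contraTneq hG => ->; apply: HGirr.
  case: (boolP (a \in V l.+1)) => an.
  + case: (boolP (b \in V l.+1)) => bn; first exact: IH.
    have ba : b != a by rewrite eq_sym.
    have hA' : ~~ A b a by rewrite HAsym.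
    have [p [q [h1 h2 h3 u]]] := sat_level hl hb bn ha ba hA'.
    exact: (path3' h1 h2 h3 u).
  + have [p [q [h1 h2 h3 u]]] := sat_level hl ha an hb ab hA.
    exact: (path3 h1 h2 h3 u).
Qed.

Definition f l x := #|[set y | induced A (V l) x y]|.
Definition E l := #|[set p : 'I_n * 'I_n | induced A (V l) p.1 p.2]|.

Lemma E_sum l : E l = \sum_(x in V l) f l x.
Proof.
rewrite /E card_pairs (bigID (fun x => x \in V l)) /= [X in _ + X]big1 ?addn0 //.
move=> x xn; apply/eqP; rewrite cards_eq0; apply/eqP/setP => y; rewrite !inE.
by rewrite /induced (negbTE xn) /= ?andbF.
Qed.

Lemma Rset_im l : 1 <= l <= r -> Rset v l = [set v l j | j in 'I_3].
Proof.
move=> hl; apply/setP => y; apply/idP/imsetP.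
- by move/RsetP => [j ->]; exists j.
- by move=> [j _ ->]; apply: Rset_v.
Qed.

Lemma card_R l : 1 <= l <= r -> #|Rset v l| = 3.
Proof. by move=> hl; rewrite Rset_im // card_imset ?card_ord // => j k /(v_inj hl). Qed.

Lemma crossc l j x : 1 <= l <= r -> x \in W l j :|: V l.+1 -> #|[set y | cross l j x y]| = 1.
Proof. by move=> hl; have [_ [_ h] _ _] := H4 hl j; apply: h. Qed.
Lemma WUc l j x : 1 <= l <= r -> x \in W l j :|: U l j -> #|[set y | WU l j x y]| = 1.
Proof. by move=> hl; have [_ _ [_ h] _] := H4 hl j; apply: h. Qed.
Lemma YEc l j x : 1 <= l <= r -> x \in Y l j -> #|[set y | YE l j x y]| = 1.
Proof. by move=> hl; have [_ _ _ [_ h]] := H4 hl j; apply: h. Qed.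

Lemma f_N l x : 1 <= l <= r -> x \in V l.+1 -> f l x = f l.+1 x + 3.
Proof.
move=> hl xn.
have xl : x \in V l by apply: (Vmono _ _ xn); lia.
have e : [set y | induced A (V l) x y] =
    [set y | induced A (V l.+1) x y] :|: \bigcup_(j : 'I_3) [set y | cross l j x y].
  apply/setP => y; rewrite !inE; apply/idP/idP.
  - move=> /and3P [hA _ yl]; case: (boolP (y \in V l.+1)) => yn.
      by rewrite /induced hA xn yn.
    have [j hj] := NB_N hl xn yl yn hA.
    by apply/orP; right; apply/bigcupP; exists j => //; rewrite inE.
  - case/orP => [/and3P [hA _ yn]|/bigcupP [j _]].
      by rewrite /induced hA xl; apply: (Vmono _ _ yn); lia.
    rewrite inE => h; rewrite /induced (cross_A h) xl /=.
    case: (cross_loc hl h) => [[xw _]|[_ yw]]; first by exfalso; apply: (Vs_N hl (W_Vs hl xw) xn).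
    exact: (Vs_V hl (W_Vs hl yw)).
rewrite /f e cardsUd.
  congr (_ + _); rewrite -sum1_card partition_disjoint_bigcup /=.
    rewrite (eq_bigr (fun _ => 1)) ?sum_nat_const ?card_ord // => j _.
    by rewrite sum1_card crossc // in_setU xn orbT.
  move=> j k jk; rewrite -setI_eq0; apply/eqP/setP => y; rewrite !inE.
  apply/negP => /andP [h1 h2].
  case: (cross_loc hl h1) => [[xw _]|[_ yw]]; first by apply: (Vs_N hl (W_Vs hl xw) xn).
  case: (cross_loc hl h2) => [[xw _]|[_ yw']]; first by apply: (Vs_N hl (W_Vs hl xw) xn).
  by move: jk; rewrite (Vs_Vs hl (W_Vs hl yw) (W_Vs hl yw')) eqxx.
move=> z; rewrite !inE => /and3P [_ _ zn] /bigcupP [j _]; rewrite inE => h.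
case: (cross_loc hl h) => [[xw _]|[_ zw]]; first by apply: (Vs_N hl (W_Vs hl xw) xn).
exact: (Vs_N hl (W_Vs hl zw) zn).
Qed.

Lemma f_R l j : 1 <= l <= r -> f l (v l j) = 2 + #|Vs l j|.
Proof.
move=> hl; rewrite /f.
set S := [set y | induced A (V l) (v l j) y].
have vl : v l j \in V l by apply: R_V; rewrite // Rset_v.
have eS : S = [set x in V l | A (v l j) x].
  by apply/setP => y; rewrite !inE /induced vl andbC.
rewrite -(cardsID (Rset v l) S) {2}eS (H3 hl j); congr (_ + _).
have -> : S :&: Rset v l = Rset v l :\ v l j.
  apply/setP => y; rewrite in_setI in_setD1 [y \in S]inE /induced vl /=.
  case yR: (y \in Rset v l); rewrite ?andbF // !andbT.
  have [k ek] := RsetP yR; subst y; rewrite (R_V hl yR) andbT.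
  case: (eqVneq k j) => [->|kj]; first by rewrite eqxx (negbTE (Ainv _)).
  by rewrite (nRR hl kj) H2 // eq_sym.
by have := cardsD1 (v l j) (Rset v l); rewrite Rset_v card_R //= => /eqP; rewrite eqSS => /eqP <-.
Qed.

Definition Ptb l j x y := [|| cross l j x y, WU l j x y | YE l j x y].
Lemma PtP l j x y : reflect (Pt l j x y) (Ptb l j x y).
Proof. exact: or3P. Qed.

Lemma nbhd_Vs l j x : 1 <= l <= r -> x \in Vs l j ->
  [set y | induced A (V l) x y] = v l j |: [set y | Ptb l j x y].
Proof.
move=> hl xs; have xl := Vs_V hl xs.
apply/setP => y; rewrite in_setU1 !inE /induced xl /=; apply/idP/idP.
- move=> /andP [hA yl]; case: (NB_s hl xs yl hA) => [->|h]; first by rewrite eqxx.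
  by apply/orP; right; apply/PtP.
- case/orP => [/eqP ->|].
    by rewrite HAsym Vs_adj //; apply: R_V; rewrite // Rset_v.
  move/PtP => h; rewrite (Pt_A h) /=.
  case: (Pt_loc hl xs h) => [ys|yn]; first exact: (Vs_V hl ys).
  by apply: (Vmono _ _ yn); lia.
Qed.

Lemma v_notPt l j x : 1 <= l <= r -> x \in Vs l j -> v l j \notin [set y | Ptb l j x y].
Proof.
move=> hl xs; rewrite inE; apply/negP => /PtP h.
case: (Pt_loc hl xs h) => [h'|h']; [apply: (R_Vs hl _ h')|apply: (R_N hl _ h')]; exact: Rset_v.
Qed.

Lemma f_W l j x : 1 <= l <= r -> x \in W l j -> f l x = 3.
Proof.
move=> hl xw; have xs := W_Vs hl xw.
rewrite /f (nbhd_Vs hl xs) cardsU1 (v_notPt hl xs).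
have -> : [set y | Ptb l j x y] = [set y | WU l j x y] :|: [set y | cross l j x y].
  apply/setP => y; rewrite !inE /Ptb orbC -orbA; case h: (YE l j x y) => //=.
  by exfalso; case: (WUY_disj j x hl) => _ /(_ xw (ind_in h).1).
rewrite cardsUd ?WUc ?crossc // ?in_setU ?xw //.
move=> z; rewrite !inE => h1 h2.
case: (cross_loc hl h2) => [[_ zn]|[xn _]]; last exact: (Vs_N hl xs xn).
exact: (Vs_N hl (WU_sub hl (ind_in h1).2) zn).
Qed.

Lemma f_U l j x : 1 <= l <= r -> x \in U l j -> f l x = 2.
Proof.
move=> hl xu; have xs := U_Vs hl xu.
rewrite /f (nbhd_Vs hl xs) cardsU1 (v_notPt hl xs).
have -> : [set y | Ptb l j x y] = [set y | WU l j x y].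
  apply/setP => y; rewrite !inE; apply/PtP/idP => [/(Pt_U hl xu) //|h].
  by constructor 2.
by rewrite WUc // in_setU xu orbT.
Qed.

Lemma f_Y l j x : 1 <= l <= r -> x \in Y l j -> f l x = 2.
Proof.
move=> hl xy; have xs := Y_Vs hl xy.
rewrite /f (nbhd_Vs hl xs) cardsU1 (v_notPt hl xs).
have -> : [set y | Ptb l j x y] = [set y | YE l j x y].
  apply/setP => y; rewrite !inE /Ptb; case h1: (cross l j x y); case h2: (WU l j x y) => //=; exfalso.
  - case: (cross_loc hl h1) => [[xw _]|[xn _]]; last exact: (Vs_N hl xs xn).
    by case: (WUY_disj j x hl) => _ /(_ xw xy).
  - case: (cross_loc hl h1) => [[xw _]|[xn _]]; last exact: (Vs_N hl xs xn).
    by case: (WUY_disj j x hl) => _ /(_ xw xy).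
  - have := (ind_in h2).1; rewrite in_setU => /orP [] h.
      by case: (WUY_disj j x hl) => _ /(_ h xy).
    by case: (WUY_disj j x hl) => _ _ /(_ h xy).
by rewrite YEc.
Qed.

Lemma Vs_eq l j : 1 <= l <= r -> Vs l j = W l j :|: (U l j :|: Y l j).
Proof. by move=> hl; have [[e _] _ _ _] := H4 hl j; rewrite e !big_cons big_nil setU0. Qed.

Lemma WUY_d l j : 1 <= l <= r ->
  (forall z, z \in W l j -> z \in U l j :|: Y l j -> False) /\
  (forall z, z \in U l j -> z \in Y l j -> False).
Proof.
move=> hl; split => z.
- move=> h1; rewrite in_setU => /orP [] h2; case: (WUY_disj j z hl).
    by move=> /(_ h1 h2).
  by move=> _ /(_ h1 h2).
- by move=> h1 h2; case: (WUY_disj j z hl) => _ _ /(_ h1 h2).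
Qed.

Lemma sumVs l j : 1 <= l <= r ->
  \sum_(x in Vs l j) f l x = 3 * #|W l j| + 2 * #|U l j| + 2 * #|Y l j|.
Proof.
move=> hl; have [d1 d2] := WUY_d j hl.
rewrite Vs_eq // bigUd // bigUd //.
rewrite (eq_bigr (fun _ => 3)) => [|x]; last exact: (f_W hl).
rewrite [X in _ + (X + _)](eq_bigr (fun _ => 2)) => [|x]; last exact: (f_U hl).
rewrite [X in _ + (_ + X)](eq_bigr (fun _ => 2)) => [|x]; last exact: (f_Y hl).
rewrite !sum_nat_const; lia.
Qed.

Lemma cardVs l j : 1 <= l <= r -> #|Vs l j| = #|W l j| + #|U l j| + #|Y l j|.
Proof. by move=> hl; have [d1 d2] := WUY_d j hl; rewrite Vs_eq // !cardsUd // addnA. Qed.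

Lemma cardW l j : 1 <= l <= r -> #|W l j| = #|V l.+1|.
Proof.
move=> hl; have [_ hb _ _] := H4 hl j.
apply: (pm_card (cross_sym l j) hb) => z zw zn.
exact: (Vs_N hl (W_Vs hl zw) zn).
Qed.

Lemma cardU l j : 1 <= l <= r -> #|U l j| = #|W l j|.
Proof.
move=> hl; have [_ _ hb _] := H4 hl j; have [d1 _] := WUY_d j hl.
symmetry; apply: (pm_card (ind_sym _) hb) => z zw zu.
by apply: (d1 z zw); rewrite in_setU zu.
Qed.

Lemma Vl_split l : 1 <= l <= r -> V l = V l.+1 :|: (Rset v l :|: \bigcup_(j : 'I_3) Vs l j).
Proof.
move=> hl; apply/setP => z; rewrite 2!in_setU; apply/idP/idP.
- move=> zl; case: (Vcases hl zl) => [->|->|[j h]] //; rewrite ?orbT //.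
  by rewrite orbA orbC; apply/orP; left; apply/bigcupP; exists j.
- case/orP => [zn|/orP [zr|/bigcupP [j _ zs]]].
  + by apply: (Vmono _ _ zn); lia.
  + exact: R_V.
  + exact: (Vs_V hl zs).
Qed.

Lemma PL l : 1 <= l <= r -> E l + 3 = E l.+1 + 3 * #|V l| + 3 * #|V l.+1|.
Proof.
move=> hl.
have dVs : forall j k : 'I_3, j != k -> [disjoint Vs l j & Vs l k].
  move=> j k jk; rewrite -setI_eq0; apply/eqP/setP => z; rewrite !inE.
  by apply/negP => /andP [h1 h2]; move: jk; rewrite (Vs_Vs hl h1 h2) eqxx.
have d1 : forall z, z \in V l.+1 -> z \in Rset v l :|: \bigcup_(j : 'I_3) Vs l j -> False.
  move=> z zn; rewrite in_setU => /orP [zr|/bigcupP [j _ zs]].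
    exact: (R_N hl zr zn).
  exact: (Vs_N hl zs zn).
have d2 : forall z, z \in Rset v l -> z \in \bigcup_(j : 'I_3) Vs l j -> False.
  by move=> z zr /bigcupP [j _ zs]; apply: (R_Vs hl zr zs).
have cV : #|V l| = #|V l.+1| + 3 + (6 * #|V l.+1| + \sum_(j : 'I_3) #|Y l j|).
  rewrite {1}(Vl_split hl) (cardsUd d1) (cardsUd d2) card_R // addnA; congr (_ + _).
  rewrite -sum1_card partition_disjoint_bigcup //.
  rewrite (eq_bigr (fun j => 2 * #|V l.+1| + #|Y l j|)) => [|j _].
    by rewrite big_split /= sum_nat_const card_ord mulnA.
  rewrite sum1_card cardVs // cardU // cardW //; set N := #|V l.+1|; lia.
have eN : \sum_(x in V l.+1) f l x = E l.+1 + 3 * #|V l.+1|.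
  rewrite E_sum (eq_bigr (fun x => f l.+1 x + 3)) => [|x xn]; last exact: f_N.
  by rewrite big_split /= sum_nat_const mulnC.
have eR : \sum_(x in Rset v l) f l x = 6 + 6 * #|V l.+1| + \sum_(j : 'I_3) #|Y l j|.
  rewrite Rset_im // big_imset /=; last by move=> j k _ _ /(v_inj hl).
  rewrite (eq_bigr (fun j => (2 + 2 * #|V l.+1|) + #|Y l j|)) => [|j _].
    rewrite big_split /= sum_nat_const card_ord; congr (_ + _); try (by apply: eq_bigl); set N := #|V l.+1|; lia.
  rewrite f_R // cardVs // cardU // cardW //; set N := #|V l.+1|; lia.
have eVs : \sum_(x in \bigcup_(j : 'I_3) Vs l j) f l x =
    15 * #|V l.+1| + 2 * \sum_(j : 'I_3) #|Y l j|.
  rewrite partition_disjoint_bigcup //.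
  rewrite (eq_bigr (fun j => 5 * #|V l.+1| + 2 * #|Y l j|)) => [|j _].
    by rewrite big_split /= sum_nat_const card_ord -big_distrr /=; set N := #|V l.+1|; lia.
  rewrite sumVs // cardU // cardW //; set N := #|V l.+1|; lia.
rewrite E_sum {1}(Vl_split hl) (bigUd _ d1) (bigUd _ d2).
move: eN eR eVs cV.
set S1 := \sum_(x in V l.+1) f l x.
set S2 := \sum_(x in Rset v l) f l x.
set S3 := \sum_(x in \bigcup_(j : 'I_3) Vs l j) f l x.
set SY := \sum_(j : 'I_3) #|Y l j|.
set N := #|V l.+1|.
set M := #|V l|.
set E1 := E l.+1.
lia.
Qed.

Lemma TL k : k <= r -> E 1 + 3 * k + 3 * #|V k.+1| = E k.+1 + 3 * #|V 1| + 6 * \sum_(2 <= i < k.+2) #|V i|.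
Proof.
elim: k => [|k IH] hk.
  by rewrite big_geq // muln0 addn0 muln0 addn0.
have hl : 1 <= k.+1 <= r by lia.
have := PL hl; have := IH (ltnW hk).
rewrite (big_nat_recr k.+2) //=.
set a := E 1; set b := E k.+1; set c := E k.+2; set d := #|V k.+1|; set e := #|V k.+2|.
set g := #|V 1|; set s := \sum_(2 <= i < k.+2) #|V i|.
lia.
Qed.

Lemma main_sec : C4_saturated_in G A /\
  (nedges A).*2 + 3 * r + 3 * #|V r.+1| =
  (nedges (induced A (V r.+1))).*2 + 3 * n + 6 * \sum_(2 <= i < r.+2) #|V i|.
Proof.
split; first by split; [exact: HAG | exact: noC4 | exact: sat].
have e1 : nedges A = nedges (induced A (V 1)).
  rewrite /nedges; apply: eq_card => p; rewrite !inE /induced H1a !inE.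
  by rewrite !andbT.
have nE l : (nedges (induced A (V l))).*2 = E l.
  by rewrite nedges2 // => [x y|x]; [apply: ind_sym | apply: contra (Ainv x) => /ind_A].
rewrite e1 !nE.
have := TL (leqnn r); rewrite H1a cardsT card_ord.
set a := E 1; set b := E r.+1; set d := #|V r.+1|; set s := \sum_(2 <= i < r.+2) #|V i|.
lia.
Qed.

End Flower2.

Unset Implicit Arguments.
Import GRing.Theory Num.Theory.
Local Open Scope ring_scope.

Theorem lemma6 (n : nat) (G A : rel 'I_n) (r : nat) (V : nat -> {set 'I_n}) :
  simple_graph G ->
  (forall x y, A x y = A y x) ->
  (forall x y, A x y -> G x y) ->
  is_flower_with G A r V ->
  C4_saturated_in G A /\
  ((nedges A)%:R : rat) =
    (nedges (induced A (V r.+1)))%:R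
    + (3%:R / 2%:R) * (n%:R - (#|V r.+1|)%:R - r%:R)
    + 3%:R * (\sum_(2 <= i < r.+2) #|V i|)%N%:R.
Proof.
move=> [Gs Gi] As AG [v [Vs [W [U [Y [[H1a H1b] H2 H3 [H4 H5] H6]]]]]].
have [sat e] := main_sec Gi As AG H1a H1b H2 H3 H4 H5 H6.
split => //.
have e' := congr1 (fun m => m%:R : rat) e; move: e' => /=.
rewrite -!mul2n !natrD.
set a := (nedges A)%:R; set b := (nedges (induced A (V r.+1)))%:R.
set c := (#|V r.+1|)%:R; set s := (\sum_(2 <= i < r.+2) #|V i|)%N%:R.
move=> h; lra.
Qed.
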